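(* Let $K=2$ and consider the loss sequence $\ell_{t,1}=0$, $\ell_{t,2}=1$ for all $1\le t\le T$. For WSU-UX run with any valid $(\eta,\gamma)$ with $\eta<T^{-2/3}$, the regret satisfies $\mathbb{E}[\mathcal R_T]\ge \frac{1}{200}T^{2/3}$.
   Context: WSU-UX. Fix integers $K\ge 2$ (number of arms/experts) and $T\ge 1$ (horizon) and hyperparameters $\eta,\gamma$. The pair $(\eta,\gamma)$ is called valid if $\eta,\gamma\in(0,1/2)$ and $\eta K/\gamma\le 1/2$. Given a fixed (oblivious) loss sequence $\ell_t=(\ell_{t,1},\dots,\ell_{t,K})\in[0,1]^K$, $t=1,\dots,T$, WSU-UX sets $\pi_{1,i}=1/K$ for all $i$ and in each round $t$: forms $\tilde\pi_{t,i}=(1-\gamma)\pi_{t,i}+\gamma/K$; draws $I_t\in[K]$ with $\Pr(I_t=i\mid\mathcal F_{t-1})=\tilde\pi_{t,i}$; sets $\hat\ell_{t,i}=\ell_{t,i}\mathbf 1[I_t=i]/\tilde\pi_{t,i}$; and updates $\pi_{t+1,i}=\pi_{t,i}\bigl(1-\eta(\hat\ell_{t,i}-\sum_{j=1}^K\pi_{t,j}\hat\ell_{t,j})\bigr)$. Here $\mathcal F_t$ is the history (sigma-algebra generated by $I_1,\dots,I_t$). The regret is $\mathbb{E}[\mathcal R_T]=\mathbb{E}\bigl[\sum_{t=1}^T\sum_{j=1}^K\tilde\pi_{t,j}\ell_{t,j}\bigr]-\min_{i\in[K]}\sum_{t=1}^T\ell_{t,i}$. *)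

(* Defs.v *)
From HB Require Import structures.
From mathcomp Require Import all_boot all_order all_algebra.
From mathcomp Require Import all_classical all_reals all_analysis.
Set Implicit Arguments. Unset Strict Implicit. Unset Printing Implicit Defensive.
Import Order.TTheory GRing.Theory Num.Theory.
Local Open Scope ring_scope.

(* Rounds are 0-indexed: round t (0 <= t < T) of the paper is round t+1. *)
(* A loss sequence is ell : nat -> 'I_K -> R; ell t i = ell_{t+1,i}. *)

Section WSUUX.
Variables (R : realType) (K : nat) (eta gamma : R).

Definition pi_init : 'I_K -> R := fun _ => 1 / K%:R.

Definition tpi (p : 'I_K -> R) (i : 'I_K) : R := (1 - gamma) * p i + gamma / K%:R.

Definition lhat (l : 'I_K -> R) (p : 'I_K -> R) (It i : 'I_K) : R :=
  if It == i then l i / tpi p i else 0.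

Definition wsu_update (l : 'I_K -> R) (p : 'I_K -> R) (It : 'I_K) : 'I_K -> R :=
  fun i => p i * (1 - eta * (lhat l p It i - \sum_(j < K) p j * lhat l p It j)).

Fixpoint path_prob (ell : nat -> 'I_K -> R) (p : 'I_K -> R) (t : nat)
    (s : seq 'I_K) : R :=
  match s with
  | [::] => 1
  | i :: s' => tpi p i * path_prob ell (wsu_update (ell t) p i) t.+1 s'
  end.

Fixpoint path_loss (ell : nat -> 'I_K -> R) (p : 'I_K -> R) (t : nat)
    (s : seq 'I_K) : R :=
  match s with
  | [::] => 0
  | i :: s' => (\sum_(j < K) tpi p j * ell t j)
               + path_loss ell (wsu_update (ell t) p i) t.+1 s'
  end.

Definition expected_alg_loss (T : nat) (ell : nat -> 'I_K -> R) : R :=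
  \sum_(s : T.-tuple 'I_K) path_prob ell pi_init 0 s * path_loss ell pi_init 0 s.

Definition best_loss (T : nat) (ell : nat -> 'I_K -> R) : R :=
  let vals := [seq \sum_(t < T) ell t i | i : 'I_K] in
  foldr Num.min (head 0 vals) vals.

Definition expected_regret (T : nat) (ell : nat -> 'I_K -> R) : R :=
  expected_alg_loss T ell - best_loss T ell.

Definition valid_params : Prop :=
  0 < eta < 1/2 /\ 0 < gamma < 1/2 /\ eta * K%:R / gamma <= 1/2.

End WSUUX.

(* the loss sequence ell_{t,1} = 0, ell_{t,2} = 1 (arms 1,2 are ord 0,1) *)
Definition lb_losses (R : realType) : nat -> 'I_2 -> R :=
  fun _ i => if i == ord0 then 0 else 1.

(* Main.v *)
Require Import Defs.
From HB Require Import structures.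
From mathcomp Require Import all_boot all_order all_algebra.
From mathcomp Require Import all_classical all_reals all_analysis.
From mathcomp Require Import ring lra.
Import Order.TTheory GRing.Theory Num.Theory.
Local Open Scope ring_scope.

Lemma big_tupleS (R : realType) n (F : n.+1.-tuple 'I_2 -> R) :
  \sum_(s : n.+1.-tuple 'I_2) F s =
  \sum_(i : 'I_2) \sum_(s : n.-tuple 'I_2) F [tuple of i :: s].
Proof.
rewrite pair_big /=.
rewrite (reindex (fun p : 'I_2 * n.-tuple 'I_2 => [tuple of p.1 :: p.2])) //=.
exists (fun t : n.+1.-tuple 'I_2 => (thead t, [tuple of behead t])).
  by move=> [i s] _ /=; rewrite theadE; congr pair; apply: val_inj.
by move=> t _ /=; rewrite [RHS](tuple_eta t).
Qed.

Definition o1 : 'I_2 := @Ordinal 2 1 erefl.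

Lemma sum2 (R : realType) (F : 'I_2 -> R) : \sum_(i < 2) F i = F ord0 + F o1.
Proof.
rewrite !big_ord_recl big_ord0 addr0; congr (_ + F _); exact: val_inj.
Qed.

Lemma upd_sum (R : realType) K (eta gamma : R) (l : 'I_K -> R) (p : 'I_K -> R) It :
  \sum_(i < K) p i = 1 ->
  \sum_(i < K) wsu_update eta gamma l p It i = 1.
Proof.
move=> Hp; rewrite /wsu_update.
set c := \sum_(j < K) p j * _.
rewrite (eq_bigr (fun i => p i - eta * (p i * lhat gamma l p It i) + eta * c * p i)); last first.
  by move=> i _; rewrite /c; ring.
rewrite !big_split /= sumrN -!mulr_sumr Hp -/c; ring.
Qed.

Lemma ord2_cases (i : 'I_2) : i = ord0 \/ i = o1.
Proof. case: i => [[|[|n]] Hn]; [left|right|by []]; exact: val_inj. Qed.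

Lemma l0 (R : realType) t : lb_losses R t ord0 = 0.
Proof. by rewrite /lb_losses eqxx. Qed.
Lemma l1 (R : realType) t : lb_losses R t o1 = 1.
Proof. by []. Qed.

Lemma upd0 (R : realType) (eta gamma : R) p t :
  wsu_update eta gamma (lb_losses R t) p ord0 = p.
Proof.
apply: funext => j; rewrite /wsu_update sum2 /lhat eqxx l0 mul0r.
case: (ord2_cases j) => ->; rewrite ?eqxx /=; 
rewrite ?mul0r ?mulr0 ?addr0 ?subr0 ?mulr0 ?subr0 ?mulr1 //.
Qed.

Lemma upd1_0 (R : realType) (eta gamma : R) p t :
  wsu_update eta gamma (lb_losses R t) p o1 ord0 =
  p ord0 * (1 + eta * (p o1 / tpi gamma p o1)).
Proof.
rewrite /wsu_update sum2 /lhat eqxx l1 /=; ring.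
Qed.

Lemma upd1_1 (R : realType) (eta gamma : R) p t :
  wsu_update eta gamma (lb_losses R t) p o1 o1 =
  p o1 * (1 - eta * ((1 - p o1) / tpi gamma p o1)).
Proof.
rewrite /wsu_update sum2 /lhat eqxx l1 /=; ring.
Qed.

Lemma tpi_sum (R : realType) (gamma : R) p :
  p ord0 + p o1 = 1 -> tpi gamma p ord0 + tpi gamma p o1 = 1.
Proof. rewrite /tpi => H; rewrite addrACA -mulrDr H; lra. Qed.

Definition Inv {R : realType} (p : 'I_2 -> R) :=
  0 <= p ord0 /\ 0 <= p o1 /\ p ord0 + p o1 = 1.

Lemma valid_eta (R : realType) (eta gamma : R) :
  valid_params 2 eta gamma -> [/\ 0 < eta, eta < 1/2, 0 < gamma, gamma < 1/2 & 4 * eta <= gamma].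
Proof.
move=> [/andP[e0 e1] [/andP[g0 g1] H]]; split => //.
move: H; rewrite ler_pdivrMr // => H; lra.
Qed.

Lemma tpi_pos (R : realType) (gamma : R) (p : 'I_2 -> R) i :
  0 < gamma < 1/2 -> Inv p -> gamma / 2 <= tpi gamma p i.
Proof.
move=> /andP[g0 g1] [h0 [h1 h2]]; rewrite /tpi.
case: (ord2_cases i) => ->; rewrite lerDr; apply: mulr_ge0 => //; lra.
Qed.

Lemma inv_upd (R : realType) (eta gamma : R) p t i :
  valid_params 2 eta gamma -> Inv p -> Inv (wsu_update eta gamma (lb_losses R t) p i).
Proof.
move=> V I; have [e0 e1 g0 g1 eg] := @valid_eta _ _ _ V.
case: (ord2_cases i) => ->; first by rewrite upd0.
have tp := @tpi_pos R gamma p o1.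
have tp' : gamma / 2 <= tpi gamma p o1 by apply: tp => //; apply/andP.
have tp0 : 0 < tpi gamma p o1 by lra.
move: I => [h0 [h1 h2]].
have S : wsu_update eta gamma (lb_losses R t) p o1 ord0 + wsu_update eta gamma (lb_losses R t) p o1 o1 = 1.
  by rewrite -sum2 upd_sum // sum2.
split; last split => //.
  rewrite upd1_0; apply: mulr_ge0 => //.
  have : 0 <= eta * (p o1 / tpi gamma p o1).
    by apply: mulr_ge0; [lra| apply: divr_ge0; lra].
  lra.
rewrite upd1_1; apply: mulr_ge0 => //.
have : eta * ((1 - p o1) / tpi gamma p o1) <= 1 / 2.
  rewrite mulrA ler_pdivrMr //.
  have : eta * (1 - p o1) <= eta by nra.
  lra.
lra.
Qed.

Lemma sum_tuple0 (R : realType) (F : 0.-tuple 'I_2 -> R) :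
  \sum_(s : 0.-tuple 'I_2) F s = F [tuple].
Proof.
rewrite (big_pred1 [tuple]) // => s; rewrite [s]tuple0 /=; apply/esym/eqP; exact: val_inj.
Qed.

Lemma prob_sum (R : realType) (eta gamma : R) n :
  valid_params 2 eta gamma -> forall p t, Inv p ->
  \sum_(s : n.-tuple 'I_2) path_prob eta gamma (lb_losses R) p t s = 1.
Proof.
move=> V; elim: n => [|n IH] p t I.
  by rewrite sum_tuple0.
rewrite big_tupleS sum2 /=.
rewrite -!mulr_sumr !IH; try exact: inv_upd.
rewrite !mulr1 tpi_sum //; by case: I => _ [].
Qed.

Lemma sum_split (R : realType) (T : finType) (F G : T -> R) a c :
  \sum_(s : T) (a * F s) * (c + G s) = a * (c * \sum_(s : T) F s + \sum_(s : T) F s * G s).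
Proof.
rewrite [c * _]mulr_sumr -big_split [a * _]mulr_sumr; apply: eq_bigr => s _ /=; ring.
Qed.

Fixpoint Sg {R : realType} (eta : R) n : R := if n is n'.+1 then 1 + (1 - eta) * Sg eta n' else 0.

Lemma Sg_ge0 (R : realType) (eta : R) n : eta <= 1 -> 0 <= Sg eta n.
Proof.
move=> e; elim: n => [|n IH] /=; first by [].
have : 0 <= (1 - eta) * Sg eta n by apply: mulr_ge0 => //; lra.
lra.
Qed.

Lemma loss_bound (R : realType) (eta gamma : R) n :
  valid_params 2 eta gamma -> forall p t, Inv p ->
  (1 - gamma) * p o1 * Sg eta n <=
  \sum_(s : n.-tuple 'I_2) path_prob eta gamma (lb_losses R) p t s *
                           path_loss eta gamma (lb_losses R) p t s.
Proof.
move=> V; have [e0 e1 g0 g1 eg] := @valid_eta _ _ _ V.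
elim: n => [|n IH] p t I.
  by rewrite sum_tuple0 /= mulr0.
rewrite big_tupleS sum2 /=.
rewrite !sum_split !prob_sum; try exact: inv_upd; try exact: V.
rewrite sum2 l0 l1 mulr0 add0r mulr1 !mulr1.
have I0 := @inv_upd _ _ _ p t ord0 V I; have I1 := @inv_upd _ _ _ p t o1 V I.
have A := IH _ t.+1 I0; have B := IH _ t.+1 I1.
move: A B I0 I1; rewrite upd0 => A B _ _.
set E0 := \sum_(s : n.-tuple 'I_2) _ in A *.
set E1 := \sum_(s : n.-tuple 'I_2) _ in B *.
move: B; rewrite upd1_1 => B.
have tp' : gamma / 2 <= tpi gamma p o1 by apply: tpi_pos => //; apply/andP.
have tp0' : gamma / 2 <= tpi gamma p ord0 by apply: tpi_pos => //; apply/andP.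
move: I => [h0 [h1 h2]].
have ts := @tpi_sum _ gamma p h2.
set q1 := p o1 * (1 - eta * ((1 - p o1) / tpi gamma p o1)) in B.
have Hq : tpi gamma p o1 * q1 = tpi gamma p o1 * p o1 - eta * p o1 * (1 - p o1).
  rewrite /q1; field; apply/eqP => Z; lra.
have A' : tpi gamma p ord0 * ((1 - gamma) * p o1 * Sg eta n) <= tpi gamma p ord0 * E0.
  by apply: ler_wpM2l => //; lra.
have B' : tpi gamma p o1 * ((1 - gamma) * q1 * Sg eta n) <= tpi gamma p o1 * E1.
  by apply: ler_wpM2l => //; lra.
have S0 : 0 <= Sg eta n by apply: Sg_ge0; lra.
set t0 := tpi gamma p ord0 in A' ts tp0' *.
set t1 := tpi gamma p o1 in B' Hq ts tp' *.
set S := Sg eta n in A' B' S0 *.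
have Z : t0 * p o1 + t1 * q1 = p o1 - eta * p o1 * (1 - p o1).
  have -> : t0 * p o1 = (1 - t1) * p o1 by rewrite -ts addrK.
  rewrite Hq; ring.
have R1 : t0 * (t1 + E0) + t1 * (t1 + E1) >= t1 + (1 - gamma) * S * (t0 * p o1 + t1 * q1).
  have -> : t0 * (t1 + E0) + t1 * (t1 + E1) = t1 * (t0 + t1) + t0 * E0 + t1 * E1 by ring.
  rewrite ts mulr1.
  have -> : t1 + (1 - gamma) * S * (t0 * p o1 + t1 * q1) =
     t1 + t0 * ((1 - gamma) * p o1 * S) + t1 * ((1 - gamma) * q1 * S) by ring.
  rewrite -addrA -[X in _ <= X]addrA lerD2l; exact: lerD.
rewrite Z in R1; apply: le_trans R1.
have c1 : (1 - gamma) * p o1 <= t1 by rewrite /t1 /tpi; lra.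
have P : 0 <= (1 - gamma) * S * eta * p o1 * p o1.
  by repeat apply: mulr_ge0; try lra.
have -> : (1 - gamma) * S * (p o1 - eta * p o1 * (1 - p o1)) =
   (1 - gamma) * p o1 * ((1 - eta) * S) + (1 - gamma) * S * eta * p o1 * p o1 by ring.
rewrite mulrDr mulr1 -[X in X <= _]addr0.
rewrite [X in _ <= X]addrA.
exact: lerD (lerD c1 (lexx _)) P.
Qed.

Lemma foldr_min_le (R : realType) (s : seq R) x y : y \in s -> foldr Num.min x s <= y.
Proof.
elim: s => [//|z s IH] /=; rewrite inE => /orP [/eqP ->|H].
  by rewrite ge_min lexx.
by rewrite ge_min IH ?orbT.
Qed.

Lemma best_le0 (R : realType) T : best_loss T (lb_losses R) <= 0.
Proof.
rewrite /best_loss; apply: foldr_min_le; apply/mapP; exists ord0.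
  by rewrite mem_enum.
by rewrite big1 // => i _; rewrite l0.
Qed.

Lemma etaSg (R : realType) (eta : R) n : eta * Sg eta n = 1 - (1 - eta) ^+ n.
Proof. elim: n => [|n IH] /=; first by rewrite mulr0 expr0 subrr.
rewrite exprS mulrDr mulr1 mulrCA IH; ring. Qed.

Lemma bern (R : realType) (eta : R) n : 0 <= eta <= 1 -> (1 - eta) ^+ n * (1 + eta * n%:R) <= 1.
Proof.
move=> /andP[e0 e1]; elim: n => [|n IH]; first by rewrite expr0 mulr0 addr0 mulr1.
have X : 0 <= (1 - eta) ^+ n by apply: exprn_ge0; lra.
rewrite exprS -mulrA mulrCA.
have -> : (1 - eta) * (1 + eta * n.+1%:R) = (1 + eta * n%:R) - eta ^+ 2 * n.+1%:R.
  by rewrite -addn1 natrD; ring.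
have Y : 0 <= (1 - eta) ^+ n * (eta ^+ 2 * n.+1%:R) by apply: mulr_ge0 => //; apply: mulr_ge0; [exact: exprn_ge0 | exact: ler0n].
rewrite mulrBr; lra.
Qed.

Lemma Sg_bound (R : realType) (eta : R) n : 0 < eta < 1 ->
  n%:R <= Sg eta n * (1 + eta * n%:R).
Proof.
move=> /andP[e0 e1].
have B := @bern R eta n; have E := @etaSg R eta n.
have B' : (1 - eta) ^+ n * (1 + eta * n%:R) <= 1 by apply: B; apply/andP; split; lra.
rewrite -(ler_pM2l e0) mulrA E mulrBl mul1r.
lra.
Qed.

Theorem mainTheorem2 (R : realType) (T : nat) (eta gamma : R) :
  (1 <= T)%N ->
  valid_params 2 eta gamma ->
  eta < (T%:R) `^ (- (2 / 3)) ->
  1 / 200 * (T%:R) `^ (2 / 3) <= expected_regret eta gamma T (lb_losses R).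
Proof.
move=> T1 V He.
have [e0 e1 g0 g1 eg] := @valid_eta _ _ _ V.
have T1' : 1 <= T%:R :> R by rewrite ler1n.
set a := T%:R `^ (2 / 3) in He *.
have a0 : 0 < a by apply: powR_gt0; lra.
have aT : a <= T%:R.
  rewrite /a -[X in _ <= X](@powRr1 _ T%:R) ?ler0n //.
  by apply: ler_powR => //; lra.
have ea : eta * a < 1.
  move: He; rewrite powRN -/a => He.
  by rewrite -(mulVf (lt0r_neq0 a0)) ltr_pM2r.
have Ipi : Inv (@pi_init R 2) by rewrite /Inv /pi_init; lra.
have E := @loss_bound R eta gamma T V (@pi_init R 2) 0 Ipi.
have Bst := best_le0 R T.
have Sb := @Sg_bound R eta T.
have Sb' : T%:R <= Sg eta T * (1 + eta * T%:R) by apply: Sb; apply/andP; split; lra.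
have S0 : 0 <= Sg eta T by apply: Sg_ge0; lra.
have a2 : a <= 2 * Sg eta T.
  have : a * (1 + eta * T%:R) <= 2 * T%:R by nra.
  move=> H.
  have P : 0 < 1 + eta * T%:R by nra.
  rewrite -(ler_pM2r P); nra.
rewrite /expected_regret /expected_alg_loss.
move: E; rewrite {1}/pi_init => E.
have Q : 1 / 4 * Sg eta T <= (1 - gamma) * (1 / 2) * Sg eta T.
  by apply: ler_wpM2r => //; lra.
lra.
Qed.
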